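(* For all real numbers $a,b,c>0$ (note $ab^2+bc^2+ca^2-abc>0$ for such $a,b,c$), \[ \frac{(a^4+b^4+c^4)^{3/2}}{\sqrt{ab^2+bc^2+ca^2-abc}\,\sqrt{a+b+c}} \leq \frac{a^5}{\sqrt{ca+b^2}} + \frac{b^5}{\sqrt{ab+c^2}} + \frac{c^5}{\sqrt{bc+a^2}}. \] *)

(* Defs.v *)
From Stdlib Require Import Reals.

(* Main.v *)
Require Import Defs.
From Stdlib Require Import Reals Lra Psatz.
Open Scope R_scope.

Lemma tang (w t m : R) : 0 < w -> 0 < t -> 0 < m ->
  w * (3 / m^2 - 2 * t / m^3) <= w / t^2.
Proof.
  intros hw ht hm.
  assert (E : w / t^2 - w * (3 / m^2 - 2 * t / m^3)
              = w * ((m - t)^2 * (m + 2*t)) / (t^2 * m^3)).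
  { field; lra. }
  assert (0 <= w * ((m - t)^2 * (m + 2*t)) / (t^2 * m^3)).
  { unfold Rdiv; apply Rmult_le_pos; [|left; apply Rinv_0_lt_compat].
    - apply Rmult_le_pos; [lra|]. apply Rmult_le_pos; [apply pow2_ge_0|lra].
    - apply Rmult_lt_0_compat; apply pow_lt; lra. }
  lra.
Qed.

Lemma holder3 (w1 w2 w3 t1 t2 t3 : R) :
  0 < w1 -> 0 < w2 -> 0 < w3 -> 0 < t1 -> 0 < t2 -> 0 < t3 ->
  (w1+w2+w3)^3 <= (w1*t1+w2*t2+w3*t3)^2 * (w1/t1^2 + w2/t2^2 + w3/t3^2).
Proof.
  intros h1 h2 h3 g1 g2 g3.
  set (WW := w1+w2+w3). set (AA := w1*t1+w2*t2+w3*t3).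
  assert (hW : 0 < WW) by (unfold WW; lra).
  assert (hA : 0 < AA) by (unfold AA; nra).
  set (m := AA / WW).
  assert (hm : 0 < m) by (unfold m; apply Rdiv_lt_0_compat; lra).
  pose proof (tang w1 t1 m h1 g1 hm).
  pose proof (tang w2 t2 m h2 g2 hm).
  pose proof (tang w3 t3 m h3 g3 hm).
  assert (E : w1 * (3 / m^2 - 2 * t1 / m^3) + w2 * (3 / m^2 - 2 * t2 / m^3)
     + w3 * (3 / m^2 - 2 * t3 / m^3) = WW / m^2).
  { assert (AA = WW * m) by (unfold m; field; lra).
    replace (w1 * (3 / m^2 - 2 * t1 / m^3) + w2 * (3 / m^2 - 2 * t2 / m^3)
     + w3 * (3 / m^2 - 2 * t3 / m^3)) with (3 * WW / m^2 - 2 * AA / m^3)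
      by (unfold WW, AA; field; lra).
    rewrite H2. field. lra. }
  assert (HS : WW / m^2 <= w1/t1^2 + w2/t2^2 + w3/t3^2) by lra.
  assert (E2 : WW^3 = AA^2 * (WW / m^2)) by (unfold m; field; lra).
  rewrite E2. apply Rmult_le_compat_l; [nra|exact HS].
Qed.

Theorem mainTheorem7 (a b c : R) (ha : 0 < a) (hb : 0 < b) (hc : 0 < c) :
  Rpower (a^4 + b^4 + c^4) (3/2)
    / (sqrt (a*b^2 + b*c^2 + c*a^2 - a*b*c) * sqrt (a + b + c))
  <= a^5 / sqrt (c*a + b^2) + b^5 / sqrt (a*b + c^2) + c^5 / sqrt (b*c + a^2).
Proof.
  set (S := a^4 + b^4 + c^4).
  assert (hS : 0 < S) by (unfold S; pose proof (pow_lt a 4 ha); pose proof (pow_lt b 4 hb); pose proof (pow_lt c 4 hc); lra).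
  assert (hQ : 0 < a*b^2 + b*c^2 + c*a^2 - a*b*c).
  { assert (0 < a*b^2) by (apply Rmult_lt_0_compat; [lra|apply pow_lt; lra]).
    assert (0 < b*c^2) by (apply Rmult_lt_0_compat; [lra|apply pow_lt; lra]).
    assert (0 < c*a^2) by (apply Rmult_lt_0_compat; [lra|apply pow_lt; lra]).
    assert (0 < a*b) by nra. assert (0 < b*c) by nra. assert (0 < c*a) by nra.
    destruct (Rle_dec c b).
    - assert (a*b*c <= a*b^2) by (simpl; nra). lra.
    - destruct (Rle_dec a c).
      + assert (a*b*c <= b*c^2) by (simpl; nra). lra.
      + assert (a*b*c <= c*a^2) by (simpl; nra). lra. }
  set (x1 := c*a + b^2). set (x2 := a*b + c^2). set (x3 := b*c + a^2).
  assert (h1 : 0 < x1) by (unfold x1; nra).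
  assert (h2 : 0 < x2) by (unfold x2; nra).
  assert (h3 : 0 < x3) by (unfold x3; nra).
  rewrite <- sqrt_mult_alt by lra.
  set (P := (a*b^2 + b*c^2 + c*a^2 - a*b*c) * (a+b+c)).
  assert (hP : 0 < P) by (unfold P; apply Rmult_lt_0_compat; lra).
  assert (EP : P = a^4 * (c*a + b^2) / a^2 + b^4 * (a*b+c^2) / b^2 + c^4 * (b*c+a^2)/c^2).
  { unfold P. field. lra. }
  replace (3/2) with (1 + /2) by field.
  rewrite Rpower_plus, Rpower_1, Rpower_sqrt by lra.
  set (s1 := sqrt x1). set (s2 := sqrt x2). set (s3 := sqrt x3).
  assert (q1 : 0 < s1) by (apply sqrt_lt_R0; lra).
  assert (q2 : 0 < s2) by (apply sqrt_lt_R0; lra).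
  assert (q3 : 0 < s3) by (apply sqrt_lt_R0; lra).
  assert (r1 : s1 * s1 = x1) by (apply sqrt_sqrt; lra).
  assert (r2 : s2 * s2 = x2) by (apply sqrt_sqrt; lra).
  assert (r3 : s3 * s3 = x3) by (apply sqrt_sqrt; lra).
  pose proof (holder3 (a^4) (b^4) (c^4) (a/s1) (b/s2) (c/s3)
     (pow_lt a 4 ha) (pow_lt b 4 hb) (pow_lt c 4 hc)
     (Rdiv_lt_0_compat _ _ ha q1) (Rdiv_lt_0_compat _ _ hb q2) (Rdiv_lt_0_compat _ _ hc q3)) as H.
  set (T := a^5 / s1 + b^5 / s2 + c^5 / s3).
  assert (ET : a^4 * (a/s1) + b^4 * (b/s2) + c^4 * (c/s3) = T) by (unfold T; field; lra).
  assert (EU : a^4 / (a/s1)^2 + b^4 / (b/s2)^2 + c^4 / (c/s3)^2 = P).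
  { rewrite EP. unfold x1, x2, x3 in r1, r2, r3. rewrite <- r1, <- r2, <- r3. field. lra. }
  rewrite ET, EU in H. fold S in H.
  assert (hT : 0 < T).
  { unfold T. pose proof (pow_lt a 5 ha); pose proof (pow_lt b 5 hb); pose proof (pow_lt c 5 hc).
    pose proof (Rdiv_lt_0_compat _ _ H0 q1); pose proof (Rdiv_lt_0_compat _ _ H1 q2);
    pose proof (Rdiv_lt_0_compat _ _ H2 q3). lra. }
  set (sP := sqrt P). set (sS := sqrt S).
  assert (hsP : 0 < sP) by (apply sqrt_lt_R0; lra).
  assert (hsS : 0 < sS) by (apply sqrt_lt_R0; lra).
  assert (eP : sP * sP = P) by (apply sqrt_sqrt; lra).
  assert (eS : sS * sS = S) by (apply sqrt_sqrt; lra).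
  apply (Rmult_le_reg_r sP); [lra|].
  unfold Rdiv. rewrite Rmult_assoc, Rinv_l by lra. rewrite Rmult_1_r.
  assert (K : (S*sS)^2 <= (T*sP)^2).
  { replace ((S*sS)^2) with (S^3) by (rewrite <- eS; ring).
    replace ((T*sP)^2) with (T^2 * P) by (rewrite <- eP; ring). lra. }
  assert (0 < S * sS) by nra. assert (0 < T * sP) by nra.
  nra.
Qed.
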